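(* For every $r\in\mathbb{F}_2((x^{-1}))$ we have $T([r])=[S(r)]$, and $T^n([r])=[S^n(r)]$ for all $n\in\mathbb{N}$.
   Context: $\mathbb{F}_2((x^{-1}))$ is the field of formal series $\sum_{z\in\mathbb{Z}}a_zx^z$, $a_z\in\mathbb{F}_2$, with $a_z\ne0$ for only finitely many positive $z$. The polynomial part is $[\sum a_zx^z]=\sum_{z\ge0}a_zx^z$. $S(r)=\frac{r}{x+1}$ if $[r](1)=0$ and $S(r)=\frac{xr}{x+1}$ if $[r](1)=1$. $T:\mathbb{F}_2[x]\to\mathbb{F}_2[x]$ is given by $T(f)=\frac{f}{x+1}$ if $f(1)=0$ and $T(f)=\frac{xf+1}{x+1}$ if $f(1)=1$. *)

(* Defs.v *)
From HB Require Import structures.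
From Stdlib Require Import ClassicalEpsilon.
From mathcomp Require Import all_boot all_order all_algebra.
Set Implicit Arguments. Unset Strict Implicit. Unset Printing Implicit Defensive.
Import Order.TTheory GRing.Theory Num.Theory.
Local Open Scope ring_scope.

(* F2 = 'F_2.  An element of F_2((x^{-1})) is a formal series
   sum_{z in Z} coef z * x^z with coef z = 0 for all z > bnd. *)
Record laurent := Laurent {
  coef : int -> 'F_2;
  bnd : nat;
  coefP : forall z : int, (bnd%:Z < z)%R -> coef z = 0 }.

Definition polypart (r : laurent) : {poly 'F_2} :=
  \poly_(i < (bnd r).+1) coef r (Posz i).

(* S(r) = r/(x+1) if [r](1) = 0, and x r/(x+1) if [r](1) = 1.
   r' / (x+1) is the unique s with (x+1) s = r', i.e. coefficientwise
   s_{z-1} + s_z = r'_z. *)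
Definition S (r : laurent) : laurent :=
  let t : int -> 'F_2 :=
    if (polypart r).[1] == 0 then coef r else (fun z => coef r (z - 1)) in
  epsilon (inhabits r)
    (fun s : laurent => forall z : int, coef s (z - 1) + coef s z = t z).

Definition T (f : {poly 'F_2}) : {poly 'F_2} :=
  if f.[1] == 0 then f %/ ('X + 1) else ('X * f + 1) %/ ('X + 1).

(* Main.v *)
Require Import Defs.
From Stdlib Require Import ClassicalEpsilon.
From mathcomp Require Import all_boot all_order all_algebra.
From mathcomp Require Import zify.
Import GRing.Theory.
Local Open Scope ring_scope.
Lemma F2_add (x : 'F_2) : x + x = 0.
Proof. by case: x => [[|[|n]] Hn] //; apply: val_inj. Qed.

Fixpoint gdiv (t : int -> 'F_2) (B : nat) (n : nat) : 'F_2 :=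
  match n with 0%N => 0 | n'.+1 => t (B%:Z - n'%:Z) + gdiv t B n' end.

Definition sdiv (t : int -> 'F_2) (B : nat) (z : int) : 'F_2 :=
  match (B%:Z - z) with Posz n => gdiv t B n | Negz _ => 0 end.

Lemma exists_div (t : int -> 'F_2) (B : nat) :
  (forall z, B%:Z < z -> t z = 0) ->
  exists s : laurent, forall z, coef s (z - 1) + coef s z = t z.
Proof.
move=> Ht.
have sP : forall z : int, B%:Z < z -> sdiv t B z = 0.
  move=> z Hz; rewrite /sdiv; case E: (B%:Z - z) => [n|n] //; lia.
exists (Laurent sP) => z /=.
rewrite /sdiv.
have -> : B%:Z - (z - 1) = (B%:Z - z) + 1 by lia.
case E: (B%:Z - z) => [n|n].
  have -> : Posz n + 1 = Posz n.+1 by lia.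
  rewrite /= -addrA F2_add addr0; congr t; lia.
rewrite Ht; last by lia.
case: n E => [|m] E.
  by rewrite /= addr0.
have -> : Negz m.+1 + 1 = Negz m by lia.
by rewrite addr0.
Qed.
Lemma F2_1 (x : 'F_2) : x != 0 -> x = 1.
Proof. by case: x => [[|[|n]] Hn] //; move=> _; apply: val_inj. Qed.

Lemma polypart_coef (r : laurent) (i : nat) : (polypart r)`_i = coef r (Posz i).
Proof.
rewrite /polypart coef_poly; case: ifP => // /negbT; rewrite -leqNgt => H.
by rewrite coefP //; lia.
Qed.

Lemma S_spec (r : laurent) : forall z, coef (S r) (z - 1) + coef (S r) z =
  (if (polypart r).[1] == 0 then coef r z else coef r (z - 1)).
Proof.
rewrite /S; set t := (if _ then _ else _).
have Ex : exists s : laurent, forall z, coef s (z - 1) + coef s z = t z.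
  apply: (@exists_div t (bnd r).+1) => z Hz.
  rewrite /t; case: ifP => _; rewrite coefP //; lia.
move=> z.
have /(_ z) -> := @epsilon_spec laurent (inhabits r)
  (fun s => forall z0, coef s (z0 - 1) + coef s z0 = t z0) Ex.
by rewrite /t; case: ifP.
Qed.

Lemma addF2 (a b : 'F_2) : a + b = 0 -> a = b.
Proof. by move=> H; rewrite -[a]addr0 -(F2_add b) addrA H add0r. Qed.

Lemma XD1_neq0 : ('X + 1 : {poly 'F_2}) != 0.
Proof. by apply: monic_neq0; rewrite -polyC1 monicXaddC. Qed.

Lemma T_S (r : laurent) : T (polypart r) = polypart (S r).
Proof.
have Hs := S_spec r.
set p := polypart r; set P := polypart (S r).
set c := coef (S r) (-1).
rewrite /T; case: ifP => H1; rewrite H1 in Hs.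
- have E : ('X + 1) * P = p + c%:P.
    apply/polyP => i; rewrite mulrDl mul1r !coefD coefXM coefC !polypart_coef.
    case: i => [|k] /=.
      have := Hs 0; rewrite sub0r => <-.
      by rewrite add0r addrC addrA F2_add add0r.
    rewrite addr0 -(Hs k.+1); congr (_ + _); congr coef; lia.
  have Ec : c = 0.
    have := congr1 (fun q => q.[1]) E; rewrite /= hornerM !hornerE.
    by rewrite F2_add mul0r (eqP H1) add0r.
  by rewrite Ec addr0 in E; rewrite -E mulrC mulpK // XD1_neq0.
- have E : ('X + 1) * P = 'X * p + (coef r (-1) + c)%:P.
    apply/polyP => i; rewrite mulrDl mul1r !coefD !coefXM coefC !polypart_coef.
    case: i => [|k] /=.
      have := Hs 0; rewrite sub0r => <-.
      by rewrite !add0r addrC addrA F2_add add0r.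
    have -> : coef r k = coef r (k.+1%:Z - 1) by congr coef; lia.
    by rewrite addr0 -(Hs k.+1); congr (_ + _); congr coef; lia.
  have Ec : coef r (-1) + c = 1.
    have := congr1 (fun q => q.[1]) E; rewrite /= hornerM !hornerE.
    rewrite F2_add mul0r => H; have H2 : 0 = p.[1] + coef r (-1) + c := H.
    by move: H2; rewrite -addrA (@F2_1 _ (negbT H1)) => /esym/addF2/esym.
  by rewrite Ec in E; rewrite -E mulrC mulpK // XD1_neq0.
Qed.

Theorem lemma2p2 (r : laurent) :
  T (polypart r) = polypart (S r) /\
  (forall n : nat, iter n T (polypart r) = polypart (iter n S r)).
Proof.
split; first exact: T_S.
elim=> [|n IH] //=.
by rewrite IH T_S.
Qed.
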